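(* Let $\mu_2>\mu_1>-\frac12$. For $\mu\in\{\mu_1,\mu_2\}$ define the normalized generalized Hermite polynomials $\widehat H^{\mu}_n(x)=\frac{\gamma_\mu(n)}{n!\,\lfloor n/2\rfloor!}H^\mu_n(x)$. Then for every $n\ge0$, $$\widehat H^{\mu_2}_n(x)=\sum_{k=0}^{\lfloor n/2\rfloor}\frac{(-1)^k4^k}{k!}(\mu_2-\mu_1)_k\,\widehat H^{\mu_1}_{n-2k}(x).$$ Equivalently, $H^{\mu_2}_n(x)=\sum_{k=0}^{\lfloor n/2\rfloor}C_{n-2k}(n)H^{\mu_1}_{n-2k}(x)$ with $$C_{n-2k}(n)=\frac{(-1)^k}{k!}\frac{n!}{(n-2k)!}\frac{4^k\lfloor n/2\rfloor!}{(\lfloor n/2\rfloor-k)!}\frac{\gamma_{\mu_1}(n-2k)}{\gamma_{\mu_2}(n)}(\mu_2-\mu_1)_k .$$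
   Context: For $\mu\notin\{-\frac12,-\frac32,\dots\}$ and $n=2p+\epsilon$ ($\epsilon\in\{0,1\}$), $\gamma_\mu(n)=2^{2p+\epsilon}p!\,(\mu+\frac12)_{p+\epsilon}$, with $(\alpha)_n=\Gamma(\alpha+n)/\Gamma(\alpha)$; $\exp_\mu(x)=\sum_{n\ge0}x^n/\gamma_\mu(n)$. The generalized Hermite (Szegő–Chihara) polynomials $H^\mu_n$ are defined by $e^{-t^2}\exp_\mu(2xt)=\sum_{n\ge0}H^\mu_n(x)t^n/n!$. *)

(* Defs.v *)
From mathcomp Require Import all_boot all_order all_algebra.
Set Implicit Arguments. Unset Strict Implicit. Unset Printing Implicit Defensive.
Import Order.TTheory GRing.Theory Num.Theory.
Local Open Scope ring_scope.

Definition poch {R : pzRingType} (a : R) (n : nat) : R :=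
  \prod_(i < n) (a + i%:R).

Definition gammamu {R : fieldType} (mu : R) (n : nat) : R :=
  2%:R ^+ n * (n./2)`!%:R * poch (mu + 2%:R^-1) (n./2 + odd n).

(* Coefficients of t^k in e^{-t^2} = sum_j (-1)^j t^(2j) / j!. *)
Definition expm_sq_coef {R : fieldType} (k : nat) : R :=
  if odd k then 0 else (-1) ^+ (k./2) / (k./2)`!%:R.

(* Coefficients of t^m in exp_mu(2 x t) = sum_m (2x)^m t^m / gamma_mu(m). *)
Definition expmu_coef {R : fieldType} (mu x : R) (m : nat) : R :=
  (2%:R * x) ^+ m / gammamu mu m.

(* Generalized Hermite polynomial: H^mu_n(x) = n! * [t^n] (e^{-t^2} exp_mu(2xt)),
   the coefficient extraction being the Cauchy product of the two series. *)
Definition Hermite {R : fieldType} (mu : R) (n : nat) (x : R) : R :=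
  n`!%:R * \sum_(i < n.+1) expm_sq_coef i * expmu_coef mu x (n - i).

Definition Hhat {R : fieldType} (mu : R) (n : nat) (x : R) : R :=
  gammamu mu n / (n`!%:R * (n./2)`!%:R) * Hermite mu n x.

Definition Ccoef {R : fieldType} (mu1 mu2 : R) (n k : nat) : R :=
  (-1) ^+ k / k`!%:R * (n`!%:R / (n - 2 * k)`!%:R)
  * (4%:R ^+ k * (n./2)`!%:R / (n./2 - k)`!%:R)
  * (gammamu mu1 (n - 2 * k) / gammamu mu2 n) * poch (mu2 - mu1) k.

(* Main.v *)
Require Import Defs.
From mathcomp Require Import all_boot all_order all_algebra.
From mathcomp Require Import zify ring lra.
Import Order.TTheory GRing.Theory Num.Theory.
Local Open Scope ring_scope.

Section L.
Variable R : realFieldType.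

Lemma natf_neq0 n : (n.+1)%:R != 0 :> R.
Proof. by rewrite pnatr_eq0. Qed.

Lemma fact_neq0 n : (n`!)%:R != 0 :> R.
Proof. by rewrite pnatr_eq0 -lt0n fact_gt0. Qed.

Lemma poch_add (a : R) m i : poch a (m + i) = poch a m * poch (a + m%:R) i.
Proof.
rewrite /poch big_split_ord /=; congr (_ * _); apply: eq_bigr => k _.
by rewrite /= natrD addrA.
Qed.

Lemma poch_recr (a : R) m : poch a m.+1 = poch a m * (a + m%:R).
Proof. by rewrite /poch big_ord_recr. Qed.

Lemma poch0 (a : R) : poch a 0 = 1.
Proof. by rewrite /poch big_ord0. Qed.

Lemma poch_gt0 (a : R) m : 0 < a -> 0 < poch a m.
Proof.
move=> ha; rewrite /poch; apply: prodr_gt0 => i _.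
by apply: ltr_wpDr.
Qed.

Lemma poch_vand_bin (b c : R) j :
  poch (c + b) j = \sum_(k < j.+1) 'C(j, k)%:R * poch b k * poch c (j - k).
Proof.
elim: j => [|j IH].
  by rewrite big_ord1 /= subn0 /poch !big_ord0 mul1r mulr1.
rewrite poch_recr IH mulr_suml.
transitivity (\sum_(k < j.+1) 'C(j, k)%:R * poch b k.+1 * poch c (j - k) +
              \sum_(k < j.+1) 'C(j, k)%:R * poch b k * poch c (j - k).+1).
  rewrite -big_split /=; apply: eq_bigr => k _.
  have hk : (k <= j)%N by rewrite -ltnS.
  rewrite !poch_recr natrB //; ring.
rewrite [RHS]big_ord_recl /= subn0 bin0 poch0 !mul1r.
rewrite /bump /=.
under [X in _ = _ + X]eq_bigr => k _ do rewrite ?add1n subSS binS natrD mulrDl mulrDl.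
rewrite big_split /= addrA [LHS]addrC; congr (_ + _).
rewrite big_ord_recl /= bin0 poch0 !mul1r subn0; congr (_ + _).
rewrite big_ord_recr /= bin_small // mul0r mul0r addr0.
apply: eq_bigr => k _; rewrite /bump /= ?add1n.
congr (_ * _); congr (poch _ _).
have := ltn_ord k; lia.
Qed.

Lemma poch_vand (b c : R) j :
  poch (c + b) j / j`!%:R =
  \sum_(k < j.+1) (poch b k / k`!%:R) * (poch c (j - k) / (j - k)`!%:R).
Proof.
rewrite poch_vand_bin mulr_suml; apply: eq_bigr => -[k hk] _ /=.
have hk' : (k <= j)%N by rewrite -ltnS.
have := bin_fact hk' => /(congr1 (fun n => n%:R : R)); rewrite !natrM => <-.
have h1 := fact_neq0 k; have h2 := fact_neq0 (j - k).
field.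
by rewrite h1 h2 pnatr_eq0 -lt0n bin_gt0.
Qed.

Lemma sum_even (F : nat -> R) n : (forall i, odd i -> F i = 0) ->
  \sum_(i < n.+1) F i = \sum_(j < n./2.+1) F j.*2.
Proof.
move=> hF; elim: n => [|n IH]; first by rewrite !big_ord1.
rewrite big_ord_recr /= IH.
case ho: (odd n.+1).
  rewrite hF // addr0 (_ : uphalf n = n./2) //.
  move: ho; rewrite /= uphalf_half; lia.
rewrite (_ : uphalf n = (n./2).+1); last by move: ho; rewrite /= uphalf_half; lia.
rewrite [RHS]big_ord_recr /=; congr (_ + F _).
move: ho; rewrite /=; lia.
Qed.

Lemma tri (G : nat -> nat -> R) m :
  \sum_(k < m.+1) \sum_(i < (m - k)%N.+1) G k i =
  \sum_(j < m.+1) \sum_(k < j.+1) G k (j - k)%N.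
Proof.
elim: m => [|m IH].
  rewrite big_ord_recl big_ord0 addr0 big_ord_recl big_ord0 addr0 /=.
  rewrite big_ord_recr big_ord0 /= add0r.
  by rewrite big_ord_recr big_ord0 /= add0r.
rewrite big_ord_recr /= subnn big_ord1.
rewrite [RHS]big_ord_recr /= -IH [X in _ = _ + X]big_ord_recr /= subnn addrA.
congr (_ + _); rewrite -big_split /=; apply: eq_bigr => -[k hk] _ /=.
have hk' : (k <= m)%N by rewrite -ltnS.
rewrite big_ord_recr /= (subSn hk').
by [].
Qed.

Lemma gam (mu : R) (e : bool) m :
  gammamu mu (e + m.*2) = 2%:R ^+ (e + m.*2) * m`!%:R * poch (mu + 2^-1) (m + e).
Proof.
rewrite /gammamu (_ : (e + m.*2)./2 = m); last by lia.
by rewrite (_ : odd (e + m.*2) = e) //; lia.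
Qed.

Lemma gam_neq0 (mu : R) n : - 2%:R^-1 < mu -> gammamu mu n != 0.
Proof.
move=> h; rewrite /gammamu !mulf_neq0 ?fact_neq0 ?expf_neq0 ?pnatr_eq0 //.
by rewrite lt0r_neq0 // poch_gt0 // -(opprK (2%:R^-1)) subr_gt0.
Qed.

Definition T (mu x : R) (p : nat) (e : bool) (j : nat) :=
  (-1) ^+ j * 4%:R ^+ j / (j`!%:R * (p - j)%N`!%:R)
  * poch (mu + 2%:R^-1 + (p - j + e)%N%:R) j * (2%:R * x) ^+ (e + (p - j)%N.*2)%N.

Lemma Hhat_expand (mu x : R) (e : bool) p : - 2%:R^-1 < mu ->
  Hhat mu (e + p.*2) x = \sum_(j < p.+1) T mu x p e j.
Proof.
move=> hmu; rewrite /Hhat /Hermite.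
rewrite (@sum_even (fun i => expm_sq_coef i * expmu_coef mu x (e + p.*2 - i))); last first.
  by move=> i hi; rewrite /expm_sq_coef hi mul0r.
rewrite (_ : (e + p.*2)./2 = p); last by lia.
rewrite !mulr_sumr; apply: eq_bigr => -[j hj] _ /=.
rewrite /expm_sq_coef odd_double doubleK /expmu_coef /T.
have [m hp] : exists m, p = (m + j)%N by exists (p - j)%N; lia.
rewrite hp addnK (_ : e + (m + j).*2 - j.*2 = e + m.*2)%N; last by lia.
rewrite !gam (_ : (m + j + e = (m + e) + j)%N); last by lia.
rewrite poch_add.
have e2 : 2%:R ^+ (e + (m + j).*2) = 2%:R ^+ (e + m.*2) * 4%:R ^+ j :> R.
  rewrite doubleD addnA exprD -(mul2n j) exprM; congr (_ * _).
  by rewrite expr2 -natrM.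
rewrite e2.
have h1 := fact_neq0 j; have h2 := fact_neq0 m; have h3 := fact_neq0 (m + j).
have h4 := fact_neq0 (e + (m + j).*2).
have h5 : poch (mu + 2%:R^-1) (m + e) != 0.
  by rewrite lt0r_neq0 // poch_gt0 // -(opprK (2%:R^-1)) subr_gt0.
have h6 : 2%:R ^+ (e + m.*2) != 0 :> R by rewrite expf_neq0 // pnatr_eq0.
by field; rewrite ?h1 ?h2 ?h3 ?h4 ?h5 ?h6.
Qed.

Lemma part1 (mu1 mu2 x : R) (e : bool) p :
  - 2%:R^-1 < mu1 -> - 2%:R^-1 < mu2 ->
  Hhat mu2 (e + p.*2) x =
    \sum_(k < p.+1)
       ((-1) ^+ k * 4%:R ^+ k / k`!%:R) * poch (mu2 - mu1) k
       * Hhat mu1 (e + p.*2 - 2 * k) x.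
Proof.
move=> h1 h2; rewrite Hhat_expand //; symmetry.
transitivity (\sum_(k < p.+1) \sum_(i < (p - k)%N.+1)
   ((-1) ^+ k * 4%:R ^+ k / k`!%:R) * poch (mu2 - mu1) k * T mu1 x (p - k)%N e i).
  apply: eq_bigr => -[k hk] _ /=.
  rewrite (_ : (e + p.*2 - 2 * k = e + (p - k).*2)%N); last by lia.
  by rewrite Hhat_expand // mulr_sumr.
rewrite (tri (fun k i => ((-1) ^+ k * 4%:R ^+ k / k`!%:R) * poch (mu2 - mu1) k
   * T mu1 x (p - k)%N e i)).
apply: eq_bigr => -[j hj] _ /=.
pose c := mu1 + 2%:R^-1 + (p - j + e)%N%:R.
transitivity (\sum_(k < j.+1) ((-1) ^+ j * 4%:R ^+ j / (p - j)%N`!%:R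
   * (2%:R * x) ^+ (e + (p - j)%N.*2)%N)
   * (poch (mu2 - mu1) k / k`!%:R * (poch c (j - k) / (j - k)`!%:R))).
  apply: eq_bigr => -[k hk] _ /=.
  rewrite /T /c (_ : (p - k - (j - k) = p - j)%N); last by lia.
  have [i hi] : exists i, j = (k + i)%N by exists (j - k)%N; lia.
  rewrite hi addKn !exprD.
  have f1 := fact_neq0 k; have f2 := fact_neq0 i; have f3 := fact_neq0 (p - (k + i)).
  by field; rewrite ?f1 ?f2 ?f3.
rewrite -mulr_sumr -poch_vand /T.
rewrite (_ : c + (mu2 - mu1) = mu2 + 2%:R^-1 + (p - j + e)%N%:R); last by rewrite /c; ring.
have f1 := fact_neq0 j; have f3 := fact_neq0 (p - j).
by field; rewrite ?f1 ?f3.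
Qed.

Lemma Hermite_Hhat (mu x : R) n : - 2%:R^-1 < mu ->
  Hermite mu n x = n`!%:R * (n./2)`!%:R / gammamu mu n * Hhat mu n x.
Proof.
move=> h; rewrite /Hhat.
have g := @gam_neq0 mu n h; have f1 := fact_neq0 n; have f2 := fact_neq0 n./2.
by field; rewrite ?g ?f1 ?f2.
Qed.
End L.

Theorem mainTheorem14 (R : realFieldType) (mu1 mu2 : R)
    (hmu1 : - 2%:R^-1 < mu1) (hmu12 : mu1 < mu2) (n : nat) (x : R) :
  Hhat mu2 n x =
    \sum_(k < (n./2).+1)
       ((-1) ^+ k * 4%:R ^+ k / k`!%:R) * poch (mu2 - mu1) k
       * Hhat mu1 (n - 2 * k) x
  /\
  Hermite mu2 n x =
    \sum_(k < (n./2).+1) Ccoef mu1 mu2 n k * Hermite mu1 (n - 2 * k) x.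
Proof.
have hmu2 : - 2%:R^-1 < mu2 by apply: lt_trans hmu12.
have [e [p ->]] : exists (e : bool) p, n = (e + p.*2)%N.
  by exists (odd n), n./2; rewrite odd_double_half.
have hp : ((e + p.*2)./2 = p)%N by lia.
rewrite hp; split; first exact: part1.
rewrite Hermite_Hhat // (@part1 R mu1) // hp mulr_sumr; apply: eq_bigr => -[k hk] _ /=.
rewrite (@Hermite_Hhat R mu1 x (e + p.*2 - 2 * k)%N) // /Ccoef hp.
rewrite (_ : ((e + p.*2 - 2 * k)./2 = p - k)%N); last by lia.
have g1 := @gam_neq0 R mu2 (e + p.*2) hmu2; have g2 := @gam_neq0 R mu1 (e + p.*2 - 2 * k)%N hmu1.
have f1 := @fact_neq0 R (e + p.*2)%N; have f2 := @fact_neq0 R p; have f3 := @fact_neq0 R k.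
have f4 := @fact_neq0 R (e + p.*2 - 2 * k)%N; have f5 := @fact_neq0 R (p - k)%N.
by field; rewrite ?g1 ?g2 ?f1 ?f2 ?f3 ?f4 ?f5.
Qed.
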